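(* Let $\lambda,\mu$ be integral partitions such that $\lambda$ stably embeds into $\mu$. Then $\|\lambda\|_p\le\|\mu\|_p$ for all $p\in[1,\infty]$ (equivalently, by Kuperberg's characterization, $\lambda$ bulk-embeds into $\mu$).
   Context: An integral partition is a finite nonincreasing sequence of positive integers. For $p\in[1,\infty)$, $\|\lambda\|_p=(\sum_i\lambda_i^p)^{1/p}$ and $\|\lambda\|_\infty=\max_i\lambda_i$. The product $\lambda\times\nu$ is the partition of all products $\lambda_i\nu_j$, reordered nonincreasingly. $\lambda=[\lambda_1,\ldots,\lambda_m]$ embeds into $\mu=[\mu_1,\ldots,\mu_n]$ if there is a map $\varphi:\{1,\ldots,m\}\to\{1,\ldots,n\}$ with $\sum_{i\in\varphi^{-1}(j)}\lambda_i\le\mu_j$ for all $j$. $\lambda$ stably embeds into $\mu$ if there is an integral partition $\nu$ such that $\lambda\times\nu$ embeds into $\mu\times\nu$. $\lambda$ bulk-embeds into $\mu$ if for every rational $\epsilon>0$ there exists $N$ with $\lambda^{\times N}$ embedding into $\mu^{\times N(1+\epsilon)}$; Kuperberg showed this holds iff $\|\lambda\|_p\le\|\mu\|_p$ for all $p\in[1,\infty]$. *)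

(* Defs.v *)
From mathcomp Require Import all_boot all_order all_algebra.
From mathcomp Require Import all_classical all_reals all_analysis.
Set Implicit Arguments. Unset Strict Implicit. Unset Printing Implicit Defensive.
Import Order.TTheory GRing.Theory Num.Theory.

Definition is_partition (l : seq nat) : bool :=
  all (fun x => 0 < x)%N l && sorted geq l.

Definition part_prod (l n : seq nat) : seq nat :=
  sort geq [seq (x * y)%N | x <- l, y <- n].

Definition embeds (l m : seq nat) : Prop :=
  exists phi : 'I_(size l) -> 'I_(size m),
    forall j : 'I_(size m),
      (\sum_(i < size l | phi i == j) nth 0%N l i <= nth 0%N m j)%N.

(* Stable embedding; the auxiliary partition nu is required to be nonempty
   (otherwise every l would stably embed into every m via the empty product). *)
Definition stably_embeds (l m : seq nat) : Prop :=
  exists nu : seq nat, [/\ is_partition nu, nu != [::] &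
                           embeds (part_prod l nu) (part_prod m nu)].

Local Open Scope ring_scope.

Definition pnorm (R : realType) (p : R) (l : seq nat) : R :=
  powR (\sum_(x <- l) powR (x%:R) p) p^-1.

(* infinity-norm (max part; 0 for the empty partition). *)
Definition infnorm (l : seq nat) : nat := (\max_(x <- l) x)%N.

(* Main.v *)
Require Import Defs.
From mathcomp Require Import all_boot all_order all_algebra.
From mathcomp Require Import all_classical all_reals all_analysis.
Import Order.TTheory GRing.Theory Num.Theory.
Local Open Scope ring_scope.

Lemma powR_supadd (R : realType) (p x y : R) : 1 <= p -> 0 <= x -> 0 <= y ->
  x `^ p + y `^ p <= (x + y) `^ p.
Proof.
move=> p1 x0 y0.
have p0 : 0 < p by apply: lt_le_trans p1.
have s0 : 0 <= x + y by rewrite addr_ge0.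
rewrite -(mulr_powRB1 x0 p0) -(mulr_powRB1 y0 p0) -(mulr_powRB1 s0 p0) mulrDl.
have q0 : 0 <= p - 1 by rewrite subr_ge0.
apply: lerD; apply: ler_wpM2l => //; apply: ge0_ler_powR => //;
  rewrite ?nnegrE // ?lerDl ?lerDr.
all: done.
Qed.

Lemma embeds_sum (R : realType) (f : nat -> R) (a b : seq nat) :
  (forall x, 0 <= f x) -> {homo f : x y / (x <= y)%N >-> x <= y} ->
  (forall x y, f x + f y <= f (x + y)%N) ->
  embeds a b -> \sum_(x <- a) f x <= \sum_(y <- b) f y.
Proof.
move=> f0 fmono fadd [phi Hphi].
rewrite (big_nth 0%N) big_mkord.
rewrite [X in _ <= X](big_nth 0%N) big_mkord.
rewrite (partition_big phi xpredT) //=.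
apply: ler_sum => j _.
apply: le_trans (fmono _ _ (Hphi j)).
apply: (big_ind2 (fun r n => r <= f n)) => //.
by move=> a1 b1 c1 d1 h1 h2; apply: le_trans (fadd _ _); apply: lerD.
Qed.

Lemma sum_prod (R : realType) (g : nat -> R) (a b : seq nat) :
  (forall x y, g (x * y)%N = g x * g y) ->
  \sum_(z <- part_prod a b) g z = (\sum_(x <- a) g x) * (\sum_(y <- b) g y).
Proof.
move=> gM; rewrite /part_prod (perm_big _ (permEl (perm_sort _ _))) big_allpairs_dep /=.
rewrite big_distrl /=; apply: eq_bigr => x _.
rewrite big_distrr /=; apply: eq_bigr => y _; exact: gM.
Qed.

Lemma inf_embeds (a b : seq nat) : embeds a b -> (infnorm a <= infnorm b)%N.
Proof.
move=> [phi Hphi]; apply/bigmax_leqP_seq => x xa _.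
have ia : (index x a < size a)%N by rewrite index_mem.
pose i := Ordinal ia.
apply: leq_trans (_ : nth 0%N b (phi i) <= _)%N; last first.
  by apply: leq_bigmax_seq => //; apply: mem_nth.
apply: leq_trans (Hphi (phi i)).
rewrite (bigD1 i) //=; rewrite nth_index //; exact: leq_addr.
Qed.

Lemma le_head (y0 : nat) t y : sorted geq (y0 :: t) -> y \in y0 :: t -> (y <= y0)%N.
Proof.
move=> /= st; rewrite inE => /predU1P[->//|yt].
have tr : transitive geq by move=> ? ? ? h1 h2; exact: leq_trans h2 h1.
by have /allP := order_path_min tr st; move=> /(_ y yt).
Qed.

Lemma inf_main (l m n : seq nat) : is_partition n -> n != [::] ->
  embeds (part_prod l n) (part_prod m n) -> (infnorm l <= infnorm m)%N.
Proof.
case: n => [//|y0 t] /andP[pos st] _ /inf_embeds H.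
have y0p : (0 < y0)%N by move: pos => /= /andP[].
apply/bigmax_leqP_seq => x xl _.
rewrite -(leq_pmul2r y0p).
have h1 : (x * y0 <= infnorm (part_prod l (y0 :: t)))%N.
  apply: leq_bigmax_seq => //; rewrite mem_sort.
  by apply/allpairsP; exists (x, y0); rewrite /= mem_head xl.
apply: leq_trans h1 (leq_trans H _).
apply/bigmax_leqP_seq => z; rewrite mem_sort => /allpairsP[[x' y'] [/= x'm y'n ->]] _.
apply: leq_mul; first by apply: leq_bigmax_seq.
exact: le_head st y'n.
Qed.

Theorem mainTheorem4 (R : realType) (l m : seq nat) :
  is_partition l -> is_partition m -> stably_embeds l m ->
  (forall p : R, 1 <= p -> pnorm p l <= pnorm p m) /\ (infnorm l <= infnorm m)%N.
Proof.
move=> _ _ [n [pn nn E]]; split; last exact: inf_main pn nn E.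
move=> p p1.
have p0 : 0 < p by apply: lt_le_trans p1.
pose g (x : nat) := (x%:R : R) `^ p.
have gM : forall x y, g (x * y)%N = g x * g y.
  by move=> x y; rewrite /g natrM powRM.
have gmono : {homo g : x y / (x <= y)%N >-> x <= y}.
  move=> x y h; apply: ge0_ler_powR; rewrite ?nnegrE ?ler0n ?ler_nat //.
  exact: ltW.
have gadd : forall x y, g x + g y <= g (x + y)%N.
  by move=> x y; rewrite /g natrD; apply: powR_supadd; rewrite ?ler0n.
have H := @embeds_sum R g _ _ (fun x => powR_ge0 _ _) gmono gadd E.
rewrite !sum_prod // in H.
have Sn : 0 < \sum_(y <- n) g y.
  case: n pn nn {E H} => [//|y0 t]; rewrite /is_partition /= => /andP[/andP[y0p _] _] _.
  rewrite big_cons; apply: ltr_wpDr; first by apply: sumr_ge0 => *; apply: powR_ge0.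
  by apply: powR_gt0; rewrite ltr0n.
rewrite ler_pM2r // in H.
rewrite /pnorm; apply: ge0_ler_powR => //.
- by rewrite invr_ge0 ltW.
- by rewrite nnegrE; apply: sumr_ge0 => *; apply: powR_ge0.
- by rewrite nnegrE; apply: sumr_ge0 => *; apply: powR_ge0.
Qed.
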